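(* Let $(X,I,T)$ be a relative monad and $(S,S_0)$ a monad compatible with $I$ in a 2-category $\mathcal{K}$, and let $\hat T$ be a lifting of $T$ to the algebras of $(S,S_0)$. Let $\widehat{m_0}\colon STS_0\Rightarrow TS_0$ be the $S$-algebra structure of $\hat T(S_0,m_0)$, where $(S_0,m_0)$ is regarded as an $X_0$-indexed $S_0$-algebra. Then $$d:=\widehat{m_0}\cdot STs_0\colon ST\Rightarrow TS_0$$ is a relative distributive law of $T$ over $(S,S_0)$.
   Context: Conventions: 1-cells compose by juxtaposition; vertical composition of 2-cells is written $\cdot$; whiskering by juxtaposition. Relative monad: a relative monad $(X,I,T)$ in $\mathcal{K}$ consists of objects $X_0,X$, 1-cells $I,T\colon X_0\to X$, an operator $(-)^\dagger\colon[I,T]\to[T,T]$ (extension: for every span $A,B\colon O\to X_0$ a function sending 2-cells $IA\Rightarrow TB$ to 2-cells $TA\Rightarrow TB$, natural in $O$, $A$ and $B$) and a 2-cell $t\colon I\Rightarrow T$ such that $k^\dagger\cdot tA=k$, $(tA)^\dagger=1_{TA}$, $(l^\dagger\cdot k)^\dagger=l^\dagger\cdot k^\dagger$ for all $k\colon IA\Rightarrow TB$, $l\colon IB\Rightarrow TC$. Monad compatible with $I\colon X_0\to X$: a pair $(S,S_0)$ of monads $(X,S,m,s)$ and $(X_0,S_0,m_0,s_0)$ in $\mathcal{K}$ with $SI=IS_0$, $mI=Im_0$, $sI=Is_0$. Relative distributive law: a 2-cell $d\colon ST\Rightarrow TS_0$ such that (D1) $d\cdot mT=Tm_0\cdot dS_0\cdot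 Sd$; (D2) $d\cdot sT=Ts_0$; (D3) for all $A,B\colon O\to X_0$ and $f\colon IA\Rightarrow TB$, $dB\cdot S(f^\dagger)=(dB\cdot Sf)^\dagger\cdot dA$ (here $dB\cdot Sf\colon IS_0A=SIA\Rightarrow TS_0B$); (D4) $d\cdot St=tS_0$ as 2-cells $SI=IS_0\Rightarrow TS_0$. Indexed algebras: for a monad $(X,S,m,s)$ and object $K$, $S\text{-}\mathrm{Alg}(K)$ is the category whose objects are pairs $(M,\mu)$ with $M\colon K\to X$, $\mu\colon SM\Rightarrow M$, $\mu\cdot sM=1_M$, $\mu\cdot S\mu=\mu\cdot mM$, and whose morphisms $(M,\mu)\to(N,\nu)$ are 2-cells $f\colon M\Rightarrow N$ with $f\cdot\mu=\nu\cdot Sf$; this gives a 2-functor $S\text{-}\mathrm{Alg}(-)\colon\mathcal{K}^{op}\to\mathbf{Cat}$ by precomposition. Lifting to algebras: a lifting of $T$ to the algebras of $(S,S_0)$ is a 2-natural transformation $\hat T\colon S_0\text{-}\mathrm{Alg}(-)\to S\text{-}\mathrm{Alg}(-)$ of the form $\hat T(M,\mu)=(TM,\hat T\mu)$ on objects and $\hat T(f)=Tf$ on morphisms, carrying the relative monad structure over $I_*\colon(M,\mu)\mapsto(IM,I\mu)$ whose unit and extension are those of $T$, which means precisely: (a) for all $K$-indexed $S_0$-algebras $(M,\mu),(N,\nu)$ and every 2-cell $f\colon IM\Rightarrow TN$ with $f\cdot I\mu=\hat T\nu\cdot Sf$, one has $f^\dagger\cdot\hat T\mu=\hat T\nu\cdot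 Sf^\dagger$; (b) for every $(M,\mu)$, $tM\cdot I\mu=\hat T\mu\cdot StM$. *)

(* Defs.v *)
Set Implicit Arguments.
Unset Strict Implicit.

Record TwoCategory : Type := {
  obj : Type;
  cell1 : Type;
  cell2 : Type;
  src1 : cell1 -> obj;
  tgt1 : cell1 -> obj;
  id1 : obj -> cell1;
  (* comp1 f g = f g  = "f after g" (juxtaposition) *)
  comp1 : cell1 -> cell1 -> cell1;
  dom2 : cell2 -> cell1;
  cod2 : cell2 -> cell1;
  id2 : cell1 -> cell2;
  (* vcomp a b = a . b  (b first) *)
  vcomp : cell2 -> cell2 -> cell2;
  (* lwhisk f a = f a ;  rwhisk a f = a f *)
  lwhisk : cell1 -> cell2 -> cell2;
  rwhisk : cell2 -> cell1 -> cell2;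

  src_id1 : forall x, src1 (id1 x) = x;
  tgt_id1 : forall x, tgt1 (id1 x) = x;
  src_comp1 : forall f g, src1 f = tgt1 g -> src1 (comp1 f g) = src1 g;
  tgt_comp1 : forall f g, src1 f = tgt1 g -> tgt1 (comp1 f g) = tgt1 f;
  comp1A : forall f g h, src1 f = tgt1 g -> src1 g = tgt1 h ->
    comp1 f (comp1 g h) = comp1 (comp1 f g) h;
  comp1_id1l : forall f, comp1 (id1 (tgt1 f)) f = f;
  comp1_id1r : forall f, comp1 f (id1 (src1 f)) = f;

  src_dom2 : forall a, src1 (dom2 a) = src1 (cod2 a);
  tgt_dom2 : forall a, tgt1 (dom2 a) = tgt1 (cod2 a);
  dom_id2 : forall f, dom2 (id2 f) = f;
  cod_id2 : forall f, cod2 (id2 f) = f;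
  dom_vcomp : forall a b, dom2 a = cod2 b -> dom2 (vcomp a b) = dom2 b;
  cod_vcomp : forall a b, dom2 a = cod2 b -> cod2 (vcomp a b) = cod2 a;
  vcompA : forall a b c, dom2 a = cod2 b -> dom2 b = cod2 c ->
    vcomp a (vcomp b c) = vcomp (vcomp a b) c;
  vcomp_id2l : forall a, vcomp (id2 (cod2 a)) a = a;
  vcomp_id2r : forall a, vcomp a (id2 (dom2 a)) = a;

  dom_lwhisk : forall f a, src1 f = tgt1 (dom2 a) ->
    dom2 (lwhisk f a) = comp1 f (dom2 a);
  cod_lwhisk : forall f a, src1 f = tgt1 (dom2 a) ->
    cod2 (lwhisk f a) = comp1 f (cod2 a);
  dom_rwhisk : forall a f, src1 (dom2 a) = tgt1 f ->
    dom2 (rwhisk a f) = comp1 (dom2 a) f;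
  cod_rwhisk : forall a f, src1 (dom2 a) = tgt1 f ->
    cod2 (rwhisk a f) = comp1 (cod2 a) f;
  lwhisk_id2 : forall f g, src1 f = tgt1 g -> lwhisk f (id2 g) = id2 (comp1 f g);
  rwhisk_id2 : forall g f, src1 g = tgt1 f -> rwhisk (id2 g) f = id2 (comp1 g f);
  lwhisk_vcomp : forall f a b, src1 f = tgt1 (dom2 a) -> dom2 a = cod2 b ->
    lwhisk f (vcomp a b) = vcomp (lwhisk f a) (lwhisk f b);
  rwhisk_vcomp : forall a b f, src1 (dom2 a) = tgt1 f -> dom2 a = cod2 b ->
    rwhisk (vcomp a b) f = vcomp (rwhisk a f) (rwhisk b f);
  lwhisk_comp1 : forall f g a, src1 f = tgt1 g -> src1 g = tgt1 (dom2 a) ->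
    lwhisk (comp1 f g) a = lwhisk f (lwhisk g a);
  rwhisk_comp1 : forall a f g, src1 (dom2 a) = tgt1 f -> src1 f = tgt1 g ->
    rwhisk a (comp1 f g) = rwhisk (rwhisk a f) g;
  lwhisk_id1 : forall a, lwhisk (id1 (tgt1 (dom2 a))) a = a;
  rwhisk_id1 : forall a, rwhisk a (id1 (src1 (dom2 a))) = a;
  lrwhisk : forall f a g, src1 f = tgt1 (dom2 a) -> src1 (dom2 a) = tgt1 g ->
    lwhisk f (rwhisk a g) = rwhisk (lwhisk f a) g;
  interchange : forall a b, src1 (dom2 a) = tgt1 (dom2 b) ->
    vcomp (rwhisk a (cod2 b)) (lwhisk (dom2 a) b)
    = vcomp (lwhisk (cod2 a) b) (rwhisk a (dom2 b))
}.

Section TwoCatNotions.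
Context {C : TwoCategory}.

Definition hom1 (f : cell1 C) (x y : obj C) : Prop := src1 f = x /\ tgt1 f = y.
Definition hom2 (a : cell2 C) (f g : cell1 C) : Prop := dom2 a = f /\ cod2 a = g.

Record is_monad (X : obj C) (S : cell1 C) (m s : cell2 C) : Prop := {
  mon_S : hom1 S X X;
  mon_m : hom2 m (comp1 S S) S;
  mon_s : hom2 s (id1 X) S;
  mon_assoc : vcomp m (lwhisk S m) = vcomp m (rwhisk m S);
  mon_unitl : vcomp m (rwhisk s S) = id2 S;
  mon_unitr : vcomp m (lwhisk S s) = id2 S
}.

(* A relative monad (X, I, T) with extension ext A B : [IA, TB] -> [TA, TB]
   and unit t : I => T. *)
Record is_relative_monad (X0 X : obj C) (I T : cell1 C)
    (ext : cell1 C -> cell1 C -> cell2 C -> cell2 C) (t : cell2 C) : Prop := {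
  rm_I : hom1 I X0 X;
  rm_T : hom1 T X0 X;
  rm_t : hom2 t I T;
  rm_ext_type : forall O A B k, hom1 A O X0 -> hom1 B O X0 ->
    hom2 k (comp1 I A) (comp1 T B) -> hom2 (ext A B k) (comp1 T A) (comp1 T B);
  rm_nat_O : forall O O' A B k h, hom1 A O X0 -> hom1 B O X0 ->
    hom2 k (comp1 I A) (comp1 T B) -> hom1 h O' O ->
    ext (comp1 A h) (comp1 B h) (rwhisk k h) = rwhisk (ext A B k) h;
  rm_nat_A : forall O A A' B k a, hom1 A O X0 -> hom1 A' O X0 -> hom1 B O X0 ->
    hom2 k (comp1 I A) (comp1 T B) -> hom2 a A' A ->
    ext A' B (vcomp k (lwhisk I a)) = vcomp (ext A B k) (lwhisk T a);
  rm_nat_B : forall O A B B' k b, hom1 A O X0 -> hom1 B O X0 -> hom1 B' O X0 ->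
    hom2 k (comp1 I A) (comp1 T B) -> hom2 b B B' ->
    ext A B' (vcomp (lwhisk T b) k) = vcomp (lwhisk T b) (ext A B k);
  rm_unit1 : forall O A B k, hom1 A O X0 -> hom1 B O X0 ->
    hom2 k (comp1 I A) (comp1 T B) -> vcomp (ext A B k) (rwhisk t A) = k;
  rm_unit2 : forall O A, hom1 A O X0 -> ext A A (rwhisk t A) = id2 (comp1 T A);
  rm_assoc : forall O A B D k l, hom1 A O X0 -> hom1 B O X0 -> hom1 D O X0 ->
    hom2 k (comp1 I A) (comp1 T B) -> hom2 l (comp1 I B) (comp1 T D) ->
    ext A D (vcomp (ext B D l) k) = vcomp (ext B D l) (ext A B k)
}.

Record compatible_monad (X0 X : obj C) (I : cell1 C)
    (S : cell1 C) (m s : cell2 C) (S0 : cell1 C) (m0 s0 : cell2 C) : Prop := {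
  cm_I : hom1 I X0 X;
  cm_S : is_monad X S m s;
  cm_S0 : is_monad X0 S0 m0 s0;
  cm_SI : comp1 S I = comp1 I S0;
  cm_m : rwhisk m I = lwhisk I m0;
  cm_s : rwhisk s I = lwhisk I s0
}.

Definition is_alg (X : obj C) (S : cell1 C) (m s : cell2 C)
    (K : obj C) (M : cell1 C) (mu : cell2 C) : Prop :=
  hom1 M K X /\ hom2 mu (comp1 S M) M /\
  vcomp mu (rwhisk s M) = id2 M /\
  vcomp mu (lwhisk S mu) = vcomp mu (rwhisk m M).

Definition is_alg_mor (S : cell1 C) (M : cell1 C) (mu : cell2 C)
    (N : cell1 C) (nu : cell2 C) (f : cell2 C) : Prop :=
  hom2 f M N /\ vcomp f mu = vcomp nu (lwhisk S f).

(* A lifting hatT of T to the algebras of (S, S0):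
   (M, mu) |-> (T M, hatT M mu), f |-> T f, 2-natural in the index object,
   carrying the relative monad structure (conditions (a), (b)). *)
Record is_lifting (X0 X : obj C) (I T : cell1 C)
    (ext : cell1 C -> cell1 C -> cell2 C -> cell2 C) (t : cell2 C)
    (S : cell1 C) (m s : cell2 C) (S0 : cell1 C) (m0 s0 : cell2 C)
    (hatT : cell1 C -> cell2 C -> cell2 C) : Prop := {
  lift_obj : forall K M mu, is_alg X0 S0 m0 s0 K M mu ->
    is_alg X S m s K (comp1 T M) (hatT M mu);
  lift_mor : forall K M mu N nu f,
    is_alg X0 S0 m0 s0 K M mu -> is_alg X0 S0 m0 s0 K N nu ->
    is_alg_mor S0 M mu N nu f ->
    is_alg_mor S (comp1 T M) (hatT M mu) (comp1 T N) (hatT N nu) (lwhisk T f);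
  lift_nat : forall K K' M mu h, is_alg X0 S0 m0 s0 K M mu -> hom1 h K' K ->
    hatT (comp1 M h) (rwhisk mu h) = rwhisk (hatT M mu) h;
  lift_ext : forall K M mu N nu f,
    is_alg X0 S0 m0 s0 K M mu -> is_alg X0 S0 m0 s0 K N nu ->
    hom2 f (comp1 I M) (comp1 T N) ->
    vcomp f (lwhisk I mu) = vcomp (hatT N nu) (lwhisk S f) ->
    vcomp (ext M N f) (hatT M mu) = vcomp (hatT N nu) (lwhisk S (ext M N f));
  lift_unit : forall K M mu, is_alg X0 S0 m0 s0 K M mu ->
    vcomp (rwhisk t M) (lwhisk I mu) = vcomp (hatT M mu) (lwhisk S (rwhisk t M))
}.

Record is_rel_distr_law (X0 X : obj C) (I T : cell1 C)
    (ext : cell1 C -> cell1 C -> cell2 C -> cell2 C) (t : cell2 C)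
    (S : cell1 C) (m s : cell2 C) (S0 : cell1 C) (m0 s0 : cell2 C)
    (d : cell2 C) : Prop := {
  rd_type : hom2 d (comp1 S T) (comp1 T S0);
  rd_D1 : vcomp d (rwhisk m T)
          = vcomp (lwhisk T m0) (vcomp (rwhisk d S0) (lwhisk S d));
  rd_D2 : vcomp d (rwhisk s T) = lwhisk T s0;
  rd_D3 : forall O A B f, hom1 A O X0 -> hom1 B O X0 ->
    hom2 f (comp1 I A) (comp1 T B) ->
    vcomp (rwhisk d B) (lwhisk S (ext A B f))
    = vcomp (ext (comp1 S0 A) (comp1 S0 B) (vcomp (rwhisk d B) (lwhisk S f)))
            (rwhisk d A);
  rd_D4 : vcomp d (lwhisk S t) = rwhisk t S0
}.

End TwoCatNotions.

(* Main.v *)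
Require Import Defs.

Section H.
Context {C : TwoCategory}.
Lemma c1l (f : cell1 C) x : tgt1 f = x -> comp1 (id1 x) f = f.
Proof. intros <-; apply comp1_id1l. Qed.
Lemma c1r (f : cell1 C) x : src1 f = x -> comp1 f (id1 x) = f.
Proof. intros <-; apply comp1_id1r. Qed.
Lemma lw1 (a : cell2 C) x : tgt1 (dom2 a) = x -> lwhisk (id1 x) a = a.
Proof. intros <-; apply lwhisk_id1. Qed.
Lemma rw1 (a : cell2 C) x : src1 (dom2 a) = x -> rwhisk a (id1 x) = a.
Proof. intros <-; apply rwhisk_id1. Qed.
Lemma v2l (a : cell2 C) f : cod2 a = f -> vcomp (id2 f) a = a.
Proof. intros <-; apply vcomp_id2l. Qed.
Lemma v2r (a : cell2 C) f : dom2 a = f -> vcomp a (id2 f) = a.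
Proof. intros <-; apply vcomp_id2r. Qed.
Lemma SIx_l {X0 X I S m s S0 m0 s0} (CM : compatible_monad (C:=C) X0 X I S m s S0 m0 s0) x :
  tgt1 x = X0 -> comp1 S (comp1 I x) = comp1 I (comp1 S0 x).
Proof.
  destruct CM as [[sI tI] [[sS tS] _ _ _ _ _] [[sS0 tS0] _ _ _ _ _] SI _ _]; intros tx.
  rewrite comp1A, SI, <- comp1A; try congruence;
  first [rewrite tgt_comp1 | rewrite src_comp1]; congruence.
Qed.
Lemma dext_l {X0 X I T ext t} (RM : is_relative_monad (C:=C) X0 X I T ext t) A B k :
  tgt1 A = X0 -> tgt1 B = X0 -> src1 A = src1 B -> dom2 k = comp1 I A -> cod2 k = comp1 T B ->
  dom2 (ext A B k) = comp1 T A.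
Proof. intros; apply (rm_ext_type RM (O:=src1 A)); split; auto. Qed.
Lemma cext_l {X0 X I T ext t} (RM : is_relative_monad (C:=C) X0 X I T ext t) A B k :
  tgt1 A = X0 -> tgt1 B = X0 -> src1 A = src1 B -> dom2 k = comp1 I A -> cod2 k = comp1 T B ->
  cod2 (ext A B k) = comp1 T B.
Proof. intros; apply (rm_ext_type RM (O:=src1 A)); split; auto. Qed.
Lemma ichg (a b : cell2 C) f f' g g' : dom2 a = f -> cod2 a = f' -> dom2 b = g -> cod2 b = g' ->
  src1 f = tgt1 g -> vcomp (rwhisk a g') (lwhisk f b) = vcomp (lwhisk f' b) (rwhisk a g).
Proof. intros <- <- <- <- H; apply interchange; auto. Qed.
End H.

Ltac base_rw := match goal with
 | H : src1 ?x = _ |- context [src1 ?x] => rewrite H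
 | H : tgt1 ?x = _ |- context [tgt1 ?x] => rewrite H
 | H : dom2 ?x = _ |- context [dom2 ?x] => rewrite H
 | H : cod2 ?x = _ |- context [cod2 ?x] => rewrite H
 end.

Ltac ty := solve [ repeat (first [ base_rw | rewrite src_id1 | rewrite tgt_id1
  | rewrite dom_id2 | rewrite cod_id2
  | rewrite src_comp1 by ty | rewrite tgt_comp1 by ty
  | rewrite dom_vcomp by ty | rewrite cod_vcomp by ty
  | rewrite dom_lwhisk by ty | rewrite cod_lwhisk by ty
  | rewrite dom_rwhisk by ty | rewrite cod_rwhisk by ty
  | rewrite <- comp1A by ty
  | rewrite c1l by ty | rewrite c1r by ty
  | match goal with CM : compatible_monad _ _ _ _ _ _ _ _ _ |- _ =>
      first [rewrite (cm_SI CM) | rewrite (SIx_l CM) by ty] end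
  | match goal with RM : is_relative_monad _ _ _ _ _ _ |- _ =>
      first [rewrite (dext_l RM) by ty | rewrite (cext_l RM) by ty] end ]); reflexivity ].

Section W.
Context {C : TwoCategory}.
Lemma alg_whisk (X0 : obj C) S0 m0 s0 K M mu K' h :
  is_monad X0 S0 m0 s0 -> is_alg X0 S0 m0 s0 K M mu -> hom1 h K' K ->
  is_alg X0 S0 m0 s0 K' (comp1 M h) (rwhisk mu h).
Proof.
  intros [[sS0 tS0] [dm0 cm0] [ds0 cs0] ma mul mur] [[sM tM] [[dmu cmu] [u a]]] [sh th].
  split; [split; ty|split; [split; ty|]].
  split.
  - rewrite rwhisk_comp1 by ty. rewrite <- rwhisk_vcomp by ty. rewrite u.
    apply rwhisk_id2. ty.
  - rewrite rwhisk_comp1 by ty. rewrite lrwhisk by ty.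
    rewrite <- !rwhisk_vcomp by ty. rewrite a. reflexivity.
Qed.
End W.

Theorem mainTheorem11 (C : TwoCategory) (X0 X : obj C) (I T : cell1 C)
    (ext : cell1 C -> cell1 C -> cell2 C -> cell2 C) (t : cell2 C)
    (S : cell1 C) (m s : cell2 C) (S0 : cell1 C) (m0 s0 : cell2 C)
    (hatT : cell1 C -> cell2 C -> cell2 C) :
  is_relative_monad X0 X I T ext t ->
  compatible_monad X0 X I S m s S0 m0 s0 ->
  is_lifting X0 X I T ext t S m s S0 m0 s0 hatT ->
  is_rel_distr_law X0 X I T ext t S m s S0 m0 s0
    (vcomp (hatT S0 m0) (lwhisk S (lwhisk T s0))).
Proof.
  intros RM CM LF.
  pose proof CM as CM'.
  destruct CM' as [[sI tI] [[sS tS] [dm cm] [ds cs] mA mL mR]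
    [[sS0 tS0] [dm0 cm0] [ds0 cs0] m0A m0L m0R] SI cmI csI].
  pose proof (rm_T RM) as [sT tT].
  pose proof (rm_t RM) as [dt ct].
  assert (A0 : is_alg X0 S0 m0 s0 X0 S0 m0).
  { split; [split; auto|split; [split; auto|split; auto]]. }
  pose proof (lift_obj LF A0) as [_ [[dH cH] [H1 H2]]].
  pose proof (lift_unit LF A0) as LU.
  assert (hS0 : hom1 S0 X0 X0) by (split; auto).
  pose proof (alg_whisk _ _ _ _ _ _ _ _ _ (cm_S0 CM) A0 hS0) as A1.
  pose proof (lift_nat LF A0 hS0) as N1.
  assert (Mm0 : is_alg_mor S0 (comp1 S0 S0) (rwhisk m0 S0) S0 m0 m0).
  { split; [split; auto|]. symmetry; exact m0A. }
  pose proof (lift_mor LF A1 A0 Mm0) as [_ L]. rewrite N1 in L.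
  set (H := hatT S0 m0) in *.
  set (u := lwhisk T s0).
  assert (du : dom2 u = T) by (unfold u; ty).
  assert (cu : cod2 u = comp1 T S0) by (unfold u; ty).
  set (d := vcomp H (lwhisk S u)).
  assert (dd : dom2 d = comp1 S T) by (unfold d; ty).
  assert (cd : cod2 d = comp1 T S0) by (unfold d; ty).
  assert (D2 : vcomp d (rwhisk s T) = u).
  { unfold d. rewrite <- vcompA by ty.
    rewrite <- (ichg s u (id1 X) S T (comp1 T S0)) by ty.
    rewrite lw1 by ty. rewrite vcompA by ty. rewrite H1. apply v2l; ty. }
  assert (D4 : vcomp d (lwhisk S t) = rwhisk t S0).
  { unfold d. rewrite <- vcompA by ty. rewrite <- lwhisk_vcomp by ty.
    unfold u. replace (vcomp (lwhisk T s0) t) with (vcomp (lwhisk T s0) (rwhisk t (id1 X0)))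
      by (rewrite rw1 by ty; reflexivity).
    rewrite <- (ichg t s0 I T (id1 X0) S0) by ty. rewrite lwhisk_vcomp by ty. rewrite vcompA by ty.
    rewrite <- LU.
    rewrite <- lwhisk_comp1 by ty. rewrite SI. rewrite lwhisk_comp1 by ty.
    rewrite <- vcompA by ty. rewrite <- lwhisk_vcomp by ty. rewrite m0R.
    rewrite lwhisk_id2 by ty. apply v2r; ty. }
  assert (K : vcomp (lwhisk T m0) (rwhisk d S0) = H).
  { unfold d. rewrite rwhisk_vcomp by ty. rewrite vcompA by ty. rewrite L.
    unfold u. rewrite <- !lrwhisk by ty. rewrite <- vcompA by ty.
    rewrite <- !lwhisk_vcomp by ty. rewrite m0L. rewrite !lwhisk_id2 by ty.
    apply v2r; ty. }
  assert (D1 : vcomp d (rwhisk m T)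
          = vcomp (lwhisk T m0) (vcomp (rwhisk d S0) (lwhisk S d))).
  { rewrite vcompA by ty. rewrite K. unfold d.
    rewrite lwhisk_vcomp by ty. rewrite vcompA by ty. rewrite H2.
    rewrite <- vcompA by ty. rewrite <- vcompA by ty. f_equal.
    rewrite <- lwhisk_comp1 by ty.
    symmetry; apply (ichg m u (comp1 S S) S T (comp1 T S0)); ty. }
  split.
  - split; ty.
  - exact D1.
  - exact D2.
  - intros O A B f [sA tA] [sB tB] [df cf].
    assert (hA : hom1 A O X0) by (split; auto).
    assert (hB : hom1 B O X0) by (split; auto).
    pose proof (alg_whisk _ _ _ _ _ _ _ _ _ (cm_S0 CM) A0 hA) as AA.
    pose proof (alg_whisk _ _ _ _ _ _ _ _ _ (cm_S0 CM) A0 hB) as AB.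
    pose proof (lift_nat LF A0 hA) as NA. fold H in NA.
    pose proof (lift_nat LF A0 hB) as NB. fold H in NB.
    set (g := vcomp (rwhisk d B) (lwhisk S f)).
    assert (dg : dom2 g = comp1 I (comp1 S0 A)) by (unfold g; ty).
    assert (cg : cod2 g = comp1 T (comp1 S0 B)) by (unfold g; ty).
    assert (Cg : vcomp g (lwhisk I (rwhisk m0 A))
                 = vcomp (hatT (comp1 S0 B) (rwhisk m0 B)) (lwhisk S g)).
    { rewrite NB. unfold g. rewrite <- vcompA by ty.
      rewrite (@lrwhisk _ I m0 A) by ty. rewrite <- cmI.
      rewrite <- (@rwhisk_comp1 _ m I A) by ty.
      rewrite <- (ichg m f (comp1 S S) S (comp1 I A) (comp1 T B)) by ty.
      rewrite vcompA by ty. rewrite (@rwhisk_comp1 _ m T B) by ty.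
      rewrite <- (@rwhisk_vcomp _ d) by ty. rewrite D1.
      rewrite (@vcompA _ (lwhisk T m0)) by ty. rewrite K.
      rewrite rwhisk_vcomp by ty. rewrite <- vcompA by ty. f_equal.
      rewrite (@lwhisk_vcomp _ S) by ty. rewrite <- (@lrwhisk _ S d B) by ty.
      rewrite (@lwhisk_comp1 _ S S f) by ty. reflexivity. }
    pose proof (lift_ext LF AA AB (conj dg cg) Cg) as LE.
    rewrite NA, NB in LE.
    assert (G4 : vcomp g (lwhisk I (rwhisk s0 A)) = vcomp (lwhisk T (rwhisk s0 B)) f).
    { unfold g. rewrite <- vcompA by ty.
      rewrite (@lrwhisk _ I s0 A) by ty. rewrite <- csI.
      rewrite <- (@rwhisk_comp1 _ s I A) by ty.
      rewrite <- (ichg s f (id1 X) S (comp1 I A) (comp1 T B)) by ty.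
      rewrite lw1 by ty.
      rewrite vcompA by ty. rewrite (@rwhisk_comp1 _ s T B) by ty.
      rewrite <- (@rwhisk_vcomp _ d) by ty. rewrite D2.
      unfold u. rewrite lrwhisk by ty. reflexivity. }
    assert (hS0A : hom1 (comp1 S0 A) O X0) by (split; ty).
    assert (hS0B : hom1 (comp1 S0 B) O X0) by (split; ty).
    assert (ha : hom2 (rwhisk s0 A) A (comp1 S0 A)) by (split; ty).
    assert (hb : hom2 (rwhisk s0 B) B (comp1 S0 B)) by (split; ty).
    pose proof (rm_nat_A RM hS0A hA hS0B (conj dg cg) ha) as NatA.
    pose proof (rm_nat_B RM hA hB hS0B (conj df cf) hb) as NatB.
    assert (dA : rwhisk d A = vcomp (rwhisk H A) (lwhisk S (lwhisk T (rwhisk s0 A)))).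
    { unfold d. rewrite rwhisk_vcomp by ty. unfold u. rewrite <- !lrwhisk by ty. reflexivity. }
    assert (dB : rwhisk d B = vcomp (rwhisk H B) (lwhisk S (lwhisk T (rwhisk s0 B)))).
    { unfold d. rewrite rwhisk_vcomp by ty. unfold u. rewrite <- !lrwhisk by ty. reflexivity. }
    rewrite dA. rewrite vcompA by ty. rewrite LE. rewrite <- vcompA by ty.
    rewrite <- lwhisk_vcomp by ty. rewrite <- NatA. rewrite G4. rewrite NatB.
    rewrite lwhisk_vcomp by ty. rewrite vcompA by ty. rewrite <- dB. reflexivity.
  - exact D4.
Qed.

Print Assumptions mainTheorem11.
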